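(* Let $n_0>3$ be a constant and consider on $u>0,q>0$ the system $$\frac{du}{d\xi}=u(3-u-n_0q),\qquad \frac{dq}{d\xi}=q(-1+u+q).$$ Define $$\Psi=(uq)^{\frac{2}{n_0-1}}\Big(\frac{n_0-5}{(n_0-1)^2}+\frac{2q}{n_0-1}-\frac{q^2}{2}-\frac{qu}{n_0+1}\Big).$$ Then along solutions $$\frac{d\Psi}{d\xi}=(n_0-5)(n_0-1)^{-3}(uq)^{\frac{2}{n_0-1}}\big((n_0-1)q-2\big)^2.$$ Consequently, for $n_0\neq5$, $\Psi$ is monotone along orbits and the only possible $\omega$-limit set (resp. $\alpha$-limit set) contained in the open quadrant $u,q>0$ is the fixed point $(u,q)=\big(\frac{n_0-3}{n_0-1},\frac{2}{n_0-1}\big)$.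
   Context: This is the equation system for the exact polytrope $\rho\propto\eta^{n_0}$, written in the homology invariants $u=4\pi r^3\rho/m$ and $q=m/(r\eta)$ with independent variable $\xi=\ln r$, where $\eta=\int_0^p dp'/\rho(p')$ and $dm/dr=4\pi r^2\rho$, $dp/dr=-m\rho/r^2$. *)

(* Defs.v *)
From Stdlib Require Import Reals.
From Coquelicot Require Import Coquelicot.
Open Scope R_scope.

Definition field_u (n0 u q : R) : R := u * (3 - u - n0 * q).
Definition field_q (u q : R) : R := q * (-1 + u + q).

Definition Psi (n0 u q : R) : R :=
  Rpower (u * q) (2 / (n0 - 1)) *
  ((n0 - 5) / (n0 - 1) ^ 2 + 2 * q / (n0 - 1) - q ^ 2 / 2 - q * u / (n0 + 1)).

Definition dPsi (n0 u q : R) : R :=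
  (n0 - 5) / (n0 - 1) ^ 3 * Rpower (u * q) (2 / (n0 - 1)) * ((n0 - 1) * q - 2) ^ 2.

Definition is_sol_on (n0 : R) (D : R -> Prop) (u q : R -> R) : Prop :=
  forall t, D t ->
    0 < u t /\ 0 < q t /\
    is_derive u t (field_u n0 (u t) (q t)) /\
    is_derive q t (field_q (u t) (q t)).

Definition omega_limit (u q : R -> R) (p : R * R) : Prop :=
  exists tk : nat -> R,
    is_lim_seq tk p_infty /\
    is_lim_seq (fun k => u (tk k)) (fst p) /\
    is_lim_seq (fun k => q (tk k)) (snd p).

Definition alpha_limit (u q : R -> R) (p : R * R) : Prop :=
  exists tk : nat -> R,
    is_lim_seq tk m_infty /\
    is_lim_seq (fun k => u (tk k)) (fst p) /\
    is_lim_seq (fun k => q (tk k)) (snd p).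

Definition fixed_pt (n0 : R) : R * R := ((n0 - 3) / (n0 - 1), 2 / (n0 - 1)).

(* Main.v *)
Require Import Defs.
From Stdlib Require Import Reals Lra Classical.
From Coquelicot Require Import Coquelicot.
Open Scope R_scope.

Lemma cont_eps (f : R -> R) (x : R) (df : R) : is_derive f x df ->
  forall eps, 0 < eps -> exists d, 0 < d /\ forall y, Rabs (y - x) < d -> Rabs (f y - f x) < eps.
Proof.
intros H eps He.
assert (C : continuity_pt f x).
{ apply continuity_pt_filterlim. exact (@ex_derive_continuous R_AbsRing R_NormedModule f x (ex_intro _ df H)). }
destruct (C eps He) as [d [Hd Hy]].
exists d; split; [exact Hd|]. intros y Hyx.
destruct (Req_dec y x) as [->|Hne].
- rewrite Rminus_eq_0, Rabs_R0; exact He.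
- apply (Hy y). split; [split; [exact I|auto]|]. exact Hyx.
Qed.

Lemma mvt_lb (f df : R -> R) a b m : a <= b ->
  (forall x, a <= x <= b -> is_derive f x (df x)) ->
  (forall x, a < x < b -> m <= df x) -> f a + m * (b - a) <= f b.
Proof.
intros Hab Hd Hm.
destruct (Req_dec a b) as [<-|Hne]; [lra|].
destruct (MVT_cor2 f df a b) as [c [Hc Hc2]]; [lra| |].
{ intros c Hc. apply is_derive_Reals. apply Hd; lra. }
specialize (Hm c Hc2). nra.
Qed.

Lemma mvt_abs (f df : R -> R) a b M : a <= b ->
  (forall x, a <= x <= b -> is_derive f x (df x)) ->
  (forall x, a < x < b -> Rabs (df x) <= M) -> Rabs (f b - f a) <= M * (b - a).
Proof.
intros Hab Hd Hm.
destruct (Req_dec a b) as [<-|Hne].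
{ rewrite Rminus_eq_0, Rabs_R0; lra. }
destruct (MVT_cor2 f df a b) as [c [Hc Hc2]]; [lra| |].
{ intros c Hc. apply is_derive_Reals. apply Hd; lra. }
rewrite Hc, Rabs_mult, (Rabs_right (b - a)) by lra.
specialize (Hm c Hc2). nra.
Qed.

Lemma exit_lemma (u q du dq : R -> R) pu pq r M a b :
  0 < r -> 0 <= M -> a <= b -> M * (b - a) < r / 2 ->
  (forall s, a <= s <= b -> is_derive u s (du s) /\ is_derive q s (dq s)) ->
  (forall s, a <= s <= b -> Rabs (u s - pu) <= r -> Rabs (q s - pq) <= r ->
      Rabs (du s) <= M /\ Rabs (dq s) <= M) ->
  Rabs (u a - pu) <= r / 2 -> Rabs (q a - pq) <= r / 2 ->
  forall s, a <= s <= b -> Rabs (u s - pu) < r /\ Rabs (q s - pq) < r.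
Proof.
intros Hr HM Hab Hh Hd Hb Hua Hqa.
set (B := fun s => Rabs (u s - pu) <= r /\ Rabs (q s - pq) <= r).
assert (K : forall x, a <= x <= b -> (forall s, a <= s < x -> B s) ->
          Rabs (u x - pu) < r /\ Rabs (q x - pq) < r).
{ intros x Hx HB.
  assert (H1 : Rabs (u x - u a) <= M * (x - a)).
  { apply (mvt_abs u du a x M); [lra| |].
    - intros y Hy; apply Hd; lra.
    - intros y Hy. destruct (HB y) as [B1 B2]; [lra|]. apply (Hb y); lra. }
  assert (H2 : Rabs (q x - q a) <= M * (x - a)).
  { apply (mvt_abs q dq a x M); [lra| |].
    - intros y Hy; apply Hd; lra.
    - intros y Hy. destruct (HB y) as [B1 B2]; [lra|]. apply (Hb y); lra. }
  assert (M * (x - a) <= M * (b - a)) by nra.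
  split.
  - replace (u x - pu) with ((u x - u a) + (u a - pu)) by ring.
    eapply Rle_lt_trans; [apply Rabs_triang|]. lra.
  - replace (q x - pq) with ((q x - q a) + (q a - pq)) by ring.
    eapply Rle_lt_trans; [apply Rabs_triang|]. lra. }
set (E := fun x => a <= x <= b /\ forall s, a <= s <= x -> B s).
destruct (completeness E) as [tau [Hub Hlub]].
{ exists b. intros x [Hx _]. lra. }
{ exists a. split; [lra|]. intros s Hs. assert (s = a) by lra. subst s.
  unfold B; split; lra. }
assert (Hat : a <= tau).
{ apply Hub. split; [lra|]. intros s Hs. assert (s = a) by lra. subst s. unfold B; split; lra. }
assert (Htb : tau <= b).
{ apply Hlub. intros x [Hx _]. lra. }
assert (Hbelow : forall s, a <= s < tau -> B s).
{ intros s Hs.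
  destruct (Rle_or_lt tau s) as [Hc|Hc]; [lra|].
  assert (exists x, E x /\ s <= x) as [x [[Hx1 Hx2] Hsx]].
  { apply Classical_Prop.NNPP. intros Hn.
    assert (tau <= s).
    { apply Hlub. intros x Ex. destruct (Rle_or_lt x s) as [?|Hlt]; [lra|].
      exfalso; apply Hn; exists x; split; [exact Ex|lra]. }
    lra. }
  apply Hx2; lra. }
assert (Htau : tau = b).
{ destruct (Rle_lt_or_eq_dec tau b Htb) as [Hlt|]; [|assumption].
  exfalso.
  destruct (K tau) as [Ku Kq]; [lra|exact Hbelow|].
  destruct (Hd tau) as [Du Dq]; [lra|].
  destruct (cont_eps u tau _ Du (r - Rabs (u tau - pu))) as [d1 [Hd1 C1]]; [lra|].
  destruct (cont_eps q tau _ Dq (r - Rabs (q tau - pq))) as [d2 [Hd2 C2]]; [lra|].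
  set (x := Rmin b (tau + Rmin d1 d2 / 2)).
  assert (Hx1 : tau < x).
  { unfold x. apply Rmin_glb_lt; [lra|]. assert (0 < Rmin d1 d2) by (apply Rmin_glb_lt; lra). lra. }
  assert (Hx2 : x <= b) by apply Rmin_l.
  assert (Hx3 : x <= tau + Rmin d1 d2 / 2) by apply Rmin_r.
  assert (E x).
  { split; [lra|]. intros s Hs.
    destruct (Rlt_or_le s tau) as [Hst|Hst]; [apply Hbelow; lra|].
    assert (Hm1 : Rmin d1 d2 <= d1) by apply Rmin_l.
    assert (Hm2 : Rmin d1 d2 <= d2) by apply Rmin_r.
    assert (Habs : Rabs (s - tau) < Rmin d1 d2).
    { rewrite Rabs_right by lra. assert (0 < Rmin d1 d2) by (apply Rmin_glb_lt; lra). lra. }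
    specialize (C1 s ltac:(lra)). specialize (C2 s ltac:(lra)).
    split.
    - replace (u s - pu) with ((u s - u tau) + (u tau - pu)) by ring.
      eapply Rle_trans; [apply Rabs_triang|]. lra.
    - replace (q s - pq) with ((q s - q tau) + (q tau - pq)) by ring.
      eapply Rle_trans; [apply Rabs_triang|]. lra. }
  assert (x <= tau) by (apply Hub; assumption). lra. }
intros s Hs. apply K; [exact Hs|]. intros s' Hs'. apply Hbelow. lra.
Qed.

Definition Mb (n0 pu pq : R) := (pu+1)*(4+pu+n0*(pq+1)) + (pq+1)*(3+pu+pq).

Lemma box_facts n0 pu pq r u q : 3 < n0 -> 0 < pu -> 0 < pq -> 0 < r -> r <= 1 ->
  r <= pu / 2 -> r <= pq / 2 -> Rabs (u - pu) <= r -> Rabs (q - pq) <= r ->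
  pu / 2 <= u <= pu + 1 /\ pq / 2 <= q <= pq + 1 /\
  Rabs (field_u n0 u q) <= Mb n0 pu pq /\ Rabs (field_q u q) <= Mb n0 pu pq /\
  Rpower (pu * pq / 4) (2 / (n0 - 1)) <= Rpower (u * q) (2 / (n0 - 1)).
Proof.
intros Hn Hpu Hpq Hr Hr1 Hr2 Hr3 Hu Hq.
apply Rabs_le_between in Hu. apply Rabs_le_between in Hq.
assert (U : pu / 2 <= u <= pu + 1) by lra.
assert (Q : pq / 2 <= q <= pq + 1) by lra.
assert (A0 : 0 <= n0*(pq+1)) by nra.
assert (A1 : 0 <= (pu+1)*(4+pu+n0*(pq+1))) by nra.
assert (A2 : 0 <= (pq+1)*(3+pu+pq)) by nra.
assert (Hnq : n0 * q <= n0 * (pq + 1)) by nra.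
assert (Hnq0 : 0 <= n0 * q) by nra.
split; [exact U|]. split; [exact Q|]. split; [|split].
- unfold field_u, Mb. apply Rabs_le. split.
  + assert (u * (3 + u + n0 * q) <= (pu+1)*(4+pu+n0*(pq+1))).
    { apply Rmult_le_compat; nra. }
    nra.
  + assert (u * (3 - u - n0 * q) <= u * 3) by nra. nra.
- unfold field_q, Mb. apply Rabs_le. split.
  + assert (q * (-1 + u + q) >= - q) by nra. nra.
  + assert (q * (1 + u + q) <= (pq+1)*(3+pu+pq)).
    { apply Rmult_le_compat; nra. }
    nra.
- apply Rle_Rpower_l.
  + apply Rlt_le. apply Rdiv_lt_0_compat; lra.
  + split; [nra|]. nra.
Qed.

Lemma drift (g dg : R -> R) t h al : 0 < h -> 0 < al ->
  (forall s, t <= s <= t + h -> is_derive g s (dg s)) ->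
  (forall s, t < s < t + h -> al <= dg s) ->
  exists a', t <= a' /\ a' + h / 4 <= t + h /\
    forall s, a' <= s <= a' + h / 4 -> al * h / 8 <= Rabs (g s).
Proof.
intros Hh Hal Hd Hdg.
assert (0 < al * h) by nra.
set (m := t + h / 2).
destruct (Rle_or_lt 0 (g m)) as [Hm|Hm].
- exists (t + 3 * h / 4). split; [lra|]. split; [lra|].
  intros s Hs.
  assert (g m + al * (s - m) <= g s).
  { apply (mvt_lb g dg m s al); [unfold m; lra| |].
    - intros x Hx; apply Hd; unfold m in *; lra.
    - intros x Hx; apply Hdg; unfold m in *; lra. }
  unfold m in *. assert (al * (h / 4) <= al * (s - (t + h/2))) by (apply Rmult_le_compat_l; lra).
  rewrite Rabs_right; lra.
- exists t. split; [lra|]. split; [lra|].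
  intros s Hs.
  assert (g s + al * (m - s) <= g m).
  { apply (mvt_lb g dg s m al); [unfold m; lra| |].
    - intros x Hx; apply Hd; unfold m in *; lra.
    - intros x Hx; apply Hdg; unfold m in *; lra. }
  unfold m in *. assert (al * (h / 4) <= al * ((t + h/2) - s)) by (apply Rmult_le_compat_l; lra).
  rewrite Rabs_left; lra.
Qed.

Lemma increase (G dG q : R -> R) t h qs K0 a' eps : 0 < h -> 0 <= K0 ->
  (forall s, t <= s <= t + h -> is_derive G s (dG s)) ->
  (forall s, t <= s <= t + h -> K0 * (q s - qs) ^ 2 <= dG s) ->
  t <= a' -> a' + h / 4 <= t + h ->
  (forall s, a' <= s <= a' + h / 4 -> eps <= Rabs (q s - qs)) -> 0 <= eps ->
  G t + K0 * eps ^ 2 * (h / 4) <= G (t + h).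
Proof.
intros Hh HK Hd Hlb Ha1 Ha2 Heps Heps0.
assert (Hpos : forall s, t <= s <= t + h -> 0 <= dG s).
{ intros s Hs. specialize (Hlb s Hs). assert (0 <= K0 * (q s - qs) ^ 2) by (apply Rmult_le_pos; [lra|apply pow2_ge_0]). lra. }
assert (E1 : G t + 0 * (a' - t) <= G a').
{ apply (mvt_lb G dG t a' 0); [lra| |]; intros x Hx; [apply Hd|apply Hpos]; lra. }
assert (E2 : G a' + K0 * eps ^ 2 * (a' + h / 4 - a') <= G (a' + h / 4)).
{ apply (mvt_lb G dG a' (a' + h/4)); [lra| |]; intros x Hx; [apply Hd; lra|].
  eapply Rle_trans; [|apply Hlb; lra].
  apply Rmult_le_compat_l; [exact HK|].
  specialize (Heps x ltac:(lra)).
  rewrite <- (pow2_abs (q x - qs)). apply pow_incr. lra. }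
assert (E3 : G (a' + h / 4) + 0 * (t + h - (a' + h / 4)) <= G (t + h)).
{ apply (mvt_lb G dG); [lra| |]; intros x Hx; [apply Hd|apply Hpos]; lra. }
lra.
Qed.

Lemma Psi_deriv (n0 : R) (Hn0 : 3 < n0) (u q : R -> R) (t : R) :
  0 < u t -> 0 < q t ->
  is_derive u t (field_u n0 (u t) (q t)) ->
  is_derive q t (field_q (u t) (q t)) ->
  is_derive (fun s => Psi n0 (u s) (q s)) t (dPsi n0 (u t) (q t)).
Proof.
intros Hu Hq Du Dq.
set (e := 2 / (n0 - 1)).
set (fu := field_u n0 (u t) (q t)).
set (fq := field_q (u t) (q t)).
assert (Dw : is_derive (fun s => u s * q s) t (fu * q t + u t * fq)).
{ apply (is_derive_mult u q t fu fq Du Dq). intros; apply Rmult_comm. }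
assert (Dl : is_derive (fun s => e * ln (u s * q s)) t (e * ((fu * q t + u t * fq) * / (u t * q t)))).
{ apply is_derive_scal. apply (is_derive_comp ln (fun s => u s * q s)).
  - apply is_derive_ln. nra.
  - exact Dw. }
assert (DR : is_derive (fun s => Rpower (u s * q s) e) t
   (e * ((fu * q t + u t * fq) * / (u t * q t)) * exp (e * ln (u t * q t)))).
{ unfold Rpower. apply (is_derive_comp exp (fun s => e * ln (u s * q s))).
  - apply is_derive_exp.
  - exact Dl. }
unfold Psi. fold e.
eapply is_derive_ext.
{ intros s. reflexivity. }
evar (dF : R).
assert (DF : is_derive (fun s => (n0 - 5) / (n0 - 1) ^ 2 + 2 * q s / (n0 - 1) - q s ^ 2 / 2 - q s * u s / (n0 + 1)) t dF).
{ subst dF. auto_derive.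
  - split; [exists fq; exact Dq|]. split; [exists fq; exact Dq|].
    split; [exists fq; exact Dq|]. split; [exists fu; exact Du|]. tauto.
  - replace (Derive (fun x => q x) t) with fq by (symmetry; apply is_derive_unique; exact Dq). replace (Derive (fun x => u x) t) with fu by (symmetry; apply is_derive_unique; exact Du). reflexivity. }
eapply is_derive_ext; [intros s; reflexivity|].
replace (dPsi n0 (u t) (q t)) with
  ((e * ((fu * q t + u t * fq) * / (u t * q t)) * exp (e * ln (u t * q t))) *
   ((n0 - 5) / (n0 - 1) ^ 2 + 2 * q t / (n0 - 1) - q t ^ 2 / 2 - q t * u t / (n0 + 1))
   + Rpower (u t * q t) e * dF).
{ apply (is_derive_mult (fun s => Rpower (u s * q s) e) _ t _ _ DR DF). intros; apply Rmult_comm. }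
subst dF. unfold dPsi, Rpower. fold e. unfold fu, fq, field_u, field_q, e.
field. repeat split; lra.
Qed.

Lemma dPsi_eq n0 u q : 3 < n0 -> 0 < u -> 0 < q ->
  (n0 - 5) * dPsi n0 u q = (n0 - 5) ^ 2 / (n0 - 1) * Rpower (u * q) (2 / (n0 - 1)) * (q - 2 / (n0 - 1)) ^ 2.
Proof. intros. unfold dPsi. field. lra. Qed.

Lemma Rpower_pos x y : 0 < Rpower x y.
Proof. unfold Rpower. apply exp_pos. Qed.

Lemma der_sub_c (f : R -> R) x l c : is_derive f x l -> is_derive (fun s => f s - c) x l.
Proof. intros H. pose proof (is_derive_minus f (fun _ => c) x l 0 H (is_derive_const c x)) as H2.
replace l with (minus l 0). exact H2. unfold minus, plus, opp; simpl. ring. Qed.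
Lemma der_c_sub (f : R -> R) x l c : is_derive f x l -> is_derive (fun s => c - f s) x (- l).
Proof. intros H. pose proof (is_derive_minus (fun _ => c) f x 0 l (is_derive_const c x) H) as H2.
replace (- l) with (minus 0 l). exact H2. unfold minus, plus, opp; simpl. ring. Qed.

Definition solat n0 (u q : R -> R) s :=
  0 < u s /\ 0 < q s /\ is_derive u s (field_u n0 (u s) (q s)) /\ is_derive q s (field_q (u s) (q s)).

Lemma local_lemma n0 (Hn0 : 3 < n0) (H5 : n0 <> 5) pu pq : 0 < pu -> 0 < pq ->
  (pu, pq) <> fixed_pt n0 ->
  exists rho h delta, 0 < rho /\ 0 < h /\ 0 < delta /\
  forall (u q : R -> R) t, Rabs (u t - pu) <= rho -> Rabs (q t - pq) <= rho ->
   (forall s, t <= s <= t + h -> solat n0 u q s) ->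
   (n0 - 5) * Psi n0 (u t) (q t) + delta <= (n0 - 5) * Psi n0 (u (t+h)) (q (t+h)).
Proof.
intros Hpu Hpq Hfix.
set (qs := 2 / (n0 - 1)).
set (a := field_q pu pq).
assert (Hc : exists c, 0 < c /\
  ((pq <> qs /\ c = Rabs (pq - qs) / 2) \/
   (pq = qs /\ a <> 0 /\ c = Rabs a / (2 * (3 + pu + 3 * pq))))).
{ destruct (Req_dec pq qs) as [E|E].
  - assert (Ha : a <> 0).
    { unfold a, field_q. intros Hz. apply Hfix. unfold fixed_pt.
      assert (-1 + pu + pq = 0) by (apply Rmult_integral in Hz; destruct Hz; lra).
      unfold qs in E. f_equal; [|exact E].
      replace pu with (1 - pq) by lra. rewrite E. field. lra. }
    exists (Rabs a / (2 * (3 + pu + 3 * pq))). split.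
    + apply Rdiv_lt_0_compat; [apply Rabs_pos_lt; exact Ha|lra].
    + right; auto.
  - exists (Rabs (pq - qs) / 2). split.
    + assert (0 < Rabs (pq - qs)) by (apply Rabs_pos_lt; lra). lra.
    + left; auto. }
destruct Hc as [c [Hc0 Hcase]].
set (r := Rmin (Rmin 1 (pu / 2)) (Rmin (pq / 2) c)).
assert (Hr1 : r <= 1) by (unfold r; eapply Rle_trans; [apply Rmin_l|apply Rmin_l]).
assert (Hr2 : r <= pu / 2) by (unfold r; eapply Rle_trans; [apply Rmin_l|apply Rmin_r]).
assert (Hr3 : r <= pq / 2) by (unfold r; eapply Rle_trans; [apply Rmin_r|apply Rmin_l]).
assert (Hr4 : r <= c) by (unfold r; eapply Rle_trans; [apply Rmin_r|apply Rmin_r]).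
assert (Hr0 : 0 < r).
{ unfold r. apply Rmin_glb_lt; apply Rmin_glb_lt; lra. }
set (M := Mb n0 pu pq).
assert (HM : 0 < M).
{ unfold M, Mb. assert (0 <= n0 * (pq + 1)) by nra.
  assert (0 < (pu+1)*(4+pu+n0*(pq+1))) by nra.
  assert (0 < (pq+1)*(3+pu+pq)) by nra. lra. }
set (h := r / (4 * M)).
assert (Hh : 0 < h) by (unfold h; apply Rdiv_lt_0_compat; lra).
assert (HMh : M * h = r / 4) by (unfold h; field; lra).
set (P0 := Rpower (pu * pq / 4) qs).
set (K0 := (n0 - 5) ^ 2 / (n0 - 1) * P0).
assert (HK0 : 0 < K0).
{ unfold K0. apply Rmult_lt_0_compat; [|apply Rpower_pos].
  apply Rdiv_lt_0_compat; [|lra]. assert (n0 - 5 <> 0) by lra.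
  apply pow2_gt_0; assumption. }
assert (Hbox : forall (u q : R -> R) t, Rabs (u t - pu) <= r / 2 -> Rabs (q t - pq) <= r / 2 ->
   (forall s, t <= s <= t + h -> solat n0 u q s) ->
   forall s, t <= s <= t + h -> Rabs (u s - pu) < r /\ Rabs (q s - pq) < r).
{ intros u q t Hu Hq Hsol.
  apply (exit_lemma u q (fun s => field_u n0 (u s) (q s)) (fun s => field_q (u s) (q s)) pu pq r M t (t + h));
    try lra.
  - intros s Hs. destruct (Hsol s Hs) as [_ [_ [D1 D2]]]. split; assumption.
  - intros s Hs B1 B2. destruct (box_facts n0 pu pq r (u s) (q s)) as [_ [_ [F1 [F2 _]]]]; auto. }
assert (Hder : forall (u q : R -> R) t,
   (forall s, t <= s <= t + h -> solat n0 u q s) ->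
   forall s, t <= s <= t + h ->
   is_derive (fun x => (n0 - 5) * Psi n0 (u x) (q x)) s ((n0 - 5) * dPsi n0 (u s) (q s))).
{ intros u q t Hsol s Hs. destruct (Hsol s Hs) as [P1 [P2 [D1 D2]]].
  apply (is_derive_scal (fun x => Psi n0 (u x) (q x))). apply Psi_deriv; auto. }
assert (Hlb : forall (u q : R -> R) t, Rabs (u t - pu) <= r / 2 -> Rabs (q t - pq) <= r / 2 ->
   (forall s, t <= s <= t + h -> solat n0 u q s) ->
   forall s, t <= s <= t + h -> K0 * (q s - qs) ^ 2 <= (n0 - 5) * dPsi n0 (u s) (q s)).
{ intros u q t Hu Hq Hsol s Hs.
  destruct (Hbox u q t Hu Hq Hsol s Hs) as [B1 B2].
  destruct (Hsol s Hs) as [P1 [P2 _]].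
  destruct (box_facts n0 pu pq r (u s) (q s)) as [_ [_ [_ [_ F]]]]; try lra.
  rewrite dPsi_eq by assumption. fold qs. fold qs in F. unfold K0.
  apply Rmult_le_compat_r; [apply pow2_ge_0|].
  apply Rmult_le_compat_l; [|exact F].
  apply Rlt_le, Rdiv_lt_0_compat; [|lra]. assert (n0 - 5 <> 0) by lra. apply pow2_gt_0; assumption. }
destruct Hcase as [[Hne Hc]|[Heq [Ha Hc]]].
-
  exists (r / 2), h, (K0 * c ^ 2 * (h / 4)).
  split; [lra|]. split; [exact Hh|]. split.
  { apply Rmult_lt_0_compat; [apply Rmult_lt_0_compat; [exact HK0|apply pow_lt; exact Hc0]|lra]. }
  intros u q t Hu Hq Hsol.
  apply (increase (fun x => (n0 - 5) * Psi n0 (u x) (q x)) (fun x => (n0 - 5) * dPsi n0 (u x) (q x)) q t h qs K0 t c);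
    try lra.
  + apply Hder; assumption.
  + apply (Hlb u q t); assumption.
  + intros s Hs. destruct (Hbox u q t Hu Hq Hsol s ltac:(lra)) as [_ B2].
    replace (q s - qs) with ((pq - qs) - (pq - q s)) by ring.
    eapply Rle_trans; [|apply Rabs_triang_inv].
    assert (Rabs (pq - q s) = Rabs (q s - pq)) by (rewrite <- Rabs_Ropp; f_equal; ring). lra.
-
  set (al := Rabs a / 2).
  assert (Hal : 0 < al) by (unfold al; assert (0 < Rabs a) by (apply Rabs_pos_lt; exact Ha); lra).
  exists (r / 2), h, (K0 * (al * h / 8) ^ 2 * (h / 4)).
  split; [lra|]. split; [exact Hh|]. split.
  { apply Rmult_lt_0_compat; [apply Rmult_lt_0_compat; [exact HK0|apply pow_lt]|lra].
    apply Rmult_lt_0_compat; [|lra]. apply Rmult_lt_0_compat; lra. }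
  intros u q t Hu Hq Hsol.
  assert (Hclose : forall s, t <= s <= t + h -> Rabs (field_q (u s) (q s) - a) <= al).
  { intros s Hs. destruct (Hbox u q t Hu Hq Hsol s Hs) as [B1 B2].
    destruct (Hsol s Hs) as [P1 [P2 _]].
    destruct (box_facts n0 pu pq r (u s) (q s)) as [U [Q _]]; try lra.
    unfold field_q, a, field_q.
    replace (q s * (-1 + u s + q s) - pq * (-1 + pu + pq)) with
      ((q s - pq) * (-1 + u s + q s) + pq * ((u s - pu) + (q s - pq))) by ring.
    eapply Rle_trans; [apply Rabs_triang|]. rewrite !Rabs_mult.
    assert (Rabs (-1 + u s + q s) <= 3 + pu + pq).
    { apply Rabs_le. lra. }
    assert (Rabs (u s - pu + (q s - pq)) <= 2 * r).
    { eapply Rle_trans; [apply Rabs_triang|]. lra. }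
    rewrite (Rabs_right pq) by lra.
    assert (Rabs (q s - pq) * Rabs (-1 + u s + q s) <= r * (3 + pu + pq)).
    { apply Rmult_le_compat; try apply Rabs_pos; lra. }
    assert (pq * Rabs (u s - pu + (q s - pq)) <= pq * (2 * r)) by (apply Rmult_le_compat_l; lra).
    assert (r * (2 * (3 + pu + 3 * pq)) <= Rabs a).
    { rewrite Hc in Hr4. apply (Rmult_le_compat_r (2 * (3 + pu + 3 * pq))) in Hr4; [|lra].
      replace (Rabs a / (2 * (3 + pu + 3 * pq)) * (2 * (3 + pu + 3 * pq))) with (Rabs a) in Hr4
        by (field; lra). exact Hr4. }
    unfold al. nra. }
  assert (Hdr : exists a', t <= a' /\ a' + h / 4 <= t + h /\
            forall s, a' <= s <= a' + h / 4 -> al * h / 8 <= Rabs (q s - qs)).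
  { destruct (Rle_or_lt 0 a) as [Hap|Han].
    - apply (drift (fun s => q s - qs) (fun s => field_q (u s) (q s)) t h al Hh Hal).
      + intros s Hs. destruct (Hsol s Hs) as [_ [_ [_ D2]]].
        apply der_sub_c; exact D2.
      + intros s Hs. specialize (Hclose s ltac:(lra)). apply Rabs_le_between in Hclose.
        unfold al in *. rewrite Rabs_right in * by lra. lra.
    - destruct (drift (fun s => qs - q s) (fun s => - field_q (u s) (q s)) t h al Hh Hal) as [a' [A1 [A2 A3]]].
      + intros s Hs. destruct (Hsol s Hs) as [_ [_ [_ D2]]].
        apply der_c_sub; exact D2.
      + intros s Hs. specialize (Hclose s ltac:(lra)). apply Rabs_le_between in Hclose.
        unfold al in *. rewrite Rabs_left in * by lra. lra.
      + exists a'. split; [exact A1|]. split; [exact A2|]. intros s Hs.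
        rewrite <- Rabs_Ropp. replace (- (q s - qs)) with (qs - q s) by ring. apply A3; exact Hs. }
  destruct Hdr as [a' [A1 [A2 A3]]].
  apply (increase (fun x => (n0 - 5) * Psi n0 (u x) (q x)) (fun x => (n0 - 5) * dPsi n0 (u x) (q x)) q t h qs K0 a' (al * h / 8));
    try lra.
  + apply Hder; assumption.
  + apply (Hlb u q t); assumption.
  + exact A3.
  + assert (0 < al * h) by nra. lra.
Qed.

Lemma Psi_lim n0 (x y : nat -> R) pu pq : 0 < pu -> 0 < pq ->
  is_lim_seq x pu -> is_lim_seq y pq ->
  is_lim_seq (fun k => Psi n0 (x k) (y k)) (Psi n0 pu pq).
Proof.
intros Hpu Hpq Hx Hy. unfold Psi.
apply is_lim_seq_mult'.
- apply (is_lim_seq_continuous (fun w => Rpower w (2 / (n0 - 1))) (fun k => x k * y k)).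
  + apply derivable_continuous_pt. exists ((2 / (n0 - 1)) * Rpower (pu * pq) (2 / (n0 - 1) - 1)).
    apply derivable_pt_lim_power. nra.
  + apply is_lim_seq_mult'; assumption.
- simpl. unfold Rdiv.
  repeat first [ apply is_lim_seq_mult' | apply is_lim_seq_minus' | apply is_lim_seq_plus'
               | apply is_lim_seq_const | exact Hx | exact Hy ].
Qed.

Lemma ev_and (P Q : nat -> Prop) : eventually P -> eventually Q -> eventually (fun n => P n /\ Q n).
Proof.
intros [N1 H1] [N2 H2]. exists (max N1 N2). intros n Hn. split.
- apply H1. eapply Nat.le_trans; [apply Nat.le_max_l|exact Hn].
- apply H2. eapply Nat.le_trans; [apply Nat.le_max_r|exact Hn].
Qed.

Lemma ev_ex (P : nat -> Prop) : eventually P -> exists n, P n.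
Proof. intros [N H]. exists N. apply H. apply Nat.le_refl. Qed.

Lemma lim_ev (x : nat -> R) l eps : is_lim_seq x (Finite l) -> 0 < eps ->
  eventually (fun n => Rabs (x n - l) < eps).
Proof. intros H He. exact (proj2 (is_lim_seq_spec _ _) H (mkposreal eps He)). Qed.

Lemma lim_pinf (x : nat -> R) M : is_lim_seq x p_infty -> eventually (fun n => M < x n).
Proof. intros H. exact (proj2 (is_lim_seq_spec _ _) H M). Qed.

Lemma lim_minf (x : nat -> R) M : is_lim_seq x m_infty -> eventually (fun n => x n < M).
Proof. intros H. exact (proj2 (is_lim_seq_spec _ _) H M). Qed.

Lemma G_mono n0 (Hn0 : 3 < n0) (D : R -> Prop) u q :
  (forall a b c, D a -> D c -> a <= b <= c -> D b) ->
  is_sol_on n0 D u q ->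
  forall s t, D s -> D t -> s <= t ->
  (n0 - 5) * Psi n0 (u s) (q s) <= (n0 - 5) * Psi n0 (u t) (q t).
Proof.
intros Hconv Hsol s t Ds Dt Hst.
assert (H := mvt_lb (fun x => (n0 - 5) * Psi n0 (u x) (q x)) (fun x => (n0 - 5) * dPsi n0 (u x) (q x)) s t 0 Hst).
simpl in H. cut ((n0 - 5) * Psi n0 (u s) (q s) + 0 * (t - s) <= (n0 - 5) * Psi n0 (u t) (q t)); [lra|].
apply H.
- intros x Hx. destruct (Hsol x (Hconv s x t Ds Dt Hx)) as [P1 [P2 [D1 D2]]].
  apply (is_derive_scal (fun x => Psi n0 (u x) (q x))). apply Psi_deriv; auto.
- intros x Hx. destruct (Hsol x (Hconv s x t Ds Dt ltac:(lra))) as [P1 [P2 [D1 D2]]].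
  rewrite dPsi_eq by assumption.
  apply Rmult_le_pos; [|apply pow2_ge_0].
  apply Rmult_le_pos; [|apply Rlt_le, Rpower_pos].
  apply Rmult_le_pos; [apply pow2_ge_0|]. apply Rlt_le, Rinv_0_lt_compat. lra.
Qed.

Lemma G_lim n0 (x y : nat -> R) pu pq : 0 < pu -> 0 < pq ->
  is_lim_seq x pu -> is_lim_seq y pq ->
  is_lim_seq (fun k => (n0 - 5) * Psi n0 (x k) (y k)) ((n0 - 5) * Psi n0 pu pq).
Proof.
intros. exact (is_lim_seq_scal_l _ (n0 - 5) _ (Psi_lim n0 x y pu pq H H0 H1 H2)).
Qed.

Lemma omega_main n0 (Hn0 : 3 < n0) (H5 : n0 <> 5) t0 (u q : R -> R) :
  is_sol_on n0 (fun t => t0 <= t) u q ->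
  forall pu pq, 0 < pu -> 0 < pq -> omega_limit u q (pu, pq) -> (pu, pq) = fixed_pt n0.
Proof.
intros Hsol pu pq Hpu Hpq Hom.
destruct (classic ((pu, pq) = fixed_pt n0)) as [E|NE]; [exact E|exfalso].
destruct (local_lemma n0 Hn0 H5 pu pq Hpu Hpq NE) as [rho [h [delta [Hr [Hh [Hd Hloc]]]]]].
destruct Hom as [tk [Ht [Hu Hq]]]. simpl in Hu, Hq.
set (G := fun t => (n0 - 5) * Psi n0 (u t) (q t)).
set (L := (n0 - 5) * Psi n0 pu pq).
assert (HGl : is_lim_seq (fun k => G (tk k)) L) by (apply G_lim; assumption).
assert (Mono : forall s t, t0 <= s -> s <= t -> G s <= G t).
{ intros s t Hs Hst. apply (G_mono n0 Hn0 (fun t => t0 <= t) u q); auto; try lra.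
  intros a b c Ha Hc Hb; lra. }
assert (HleL : forall t, t0 <= t -> G t <= L).
{ intros t Ht0. apply Rnot_lt_le. intros Hlt.
  destruct (ev_ex _ (ev_and _ _ (lim_ev _ _ (G t - L) HGl ltac:(lra)) (lim_pinf _ t Ht))) as [k [K1 K2]].
  assert (G t <= G (tk k)) by (apply Mono; lra).
  apply Rabs_lt_between in K1. lra. }
destruct (ev_ex _ (ev_and _ _ (ev_and _ _ (lim_ev _ _ rho Hu Hr) (lim_ev _ _ rho Hq Hr))
                 (ev_and _ _ (lim_ev _ _ (delta / 2) HGl ltac:(lra)) (lim_pinf _ t0 Ht))))
  as [k [[K1 K2] [K3 K4]]].
assert (Hi := Hloc u q (tk k) ltac:(lra) ltac:(lra)).
assert (G (tk k) + delta <= G (tk k + h)).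
{ apply Hi. intros s Hs. unfold solat. apply Hsol. lra. }
assert (G (tk k + h) <= L) by (apply HleL; lra).
apply Rabs_lt_between in K3. lra.
Qed.

Lemma alpha_main n0 (Hn0 : 3 < n0) (H5 : n0 <> 5) t0 (u q : R -> R) :
  is_sol_on n0 (fun t => t <= t0) u q ->
  forall pu pq, 0 < pu -> 0 < pq -> alpha_limit u q (pu, pq) -> (pu, pq) = fixed_pt n0.
Proof.
intros Hsol pu pq Hpu Hpq Hom.
destruct (classic ((pu, pq) = fixed_pt n0)) as [E|NE]; [exact E|exfalso].
destruct (local_lemma n0 Hn0 H5 pu pq Hpu Hpq NE) as [rho [h [delta [Hr [Hh [Hd Hloc]]]]]].
destruct Hom as [tk [Ht [Hu Hq]]]. simpl in Hu, Hq.
set (G := fun t => (n0 - 5) * Psi n0 (u t) (q t)).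
set (L := (n0 - 5) * Psi n0 pu pq).
assert (HGl : is_lim_seq (fun k => G (tk k)) L) by (apply G_lim; assumption).
assert (Mono : forall s t, s <= t -> t <= t0 -> G s <= G t).
{ intros s t Hst Ht0. apply (G_mono n0 Hn0 (fun t => t <= t0) u q); auto; try lra.
  intros a b c Ha Hc Hb; lra. }
assert (HgeL : forall t, t <= t0 -> L <= G t).
{ intros t Ht0. apply Rnot_lt_le. intros Hlt.
  destruct (ev_ex _ (ev_and _ _ (lim_ev _ _ (L - G t) HGl ltac:(lra)) (lim_minf _ t Ht))) as [k [K1 K2]].
  assert (G (tk k) <= G t) by (apply Mono; lra).
  apply Rabs_lt_between in K1. lra. }
destruct (ev_ex _ (ev_and _ _ (lim_ev _ _ (delta / 2) HGl ltac:(lra)) (lim_minf _ t0 Ht)))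
  as [k' [K1' K2']].
destruct (ev_ex _ (ev_and _ _ (ev_and _ _ (lim_ev _ _ rho Hu Hr) (lim_ev _ _ rho Hq Hr))
                 (lim_minf _ (tk k' - h) Ht)))
  as [k [[K1 K2] K4]].
assert (Hi := Hloc u q (tk k) ltac:(lra) ltac:(lra)).
assert (G (tk k) + delta <= G (tk k + h)).
{ apply Hi. intros s Hs. unfold solat. apply Hsol. lra. }
assert (G (tk k + h) <= G (tk k')) by (apply Mono; lra).
assert (L <= G (tk k)) by (apply HgeL; lra).
apply Rabs_lt_between in K1'. lra.
Qed.

Theorem mainTheorem10 (n0 : R) (Hn0 : 3 < n0) :
  (forall (u q : R -> R) (t : R),
     is_sol_on n0 (fun s => s = t) u q ->
     is_derive (fun s => Psi n0 (u s) (q s)) t (dPsi n0 (u t) (q t)))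
  /\
  (n0 <> 5 ->
     (forall (D : R -> Prop) (u q : R -> R),
        (forall a b c, D a -> D c -> a <= b <= c -> D b) ->
        is_sol_on n0 D u q ->
        forall s t, D s -> D t -> s <= t ->
          (5 < n0 -> Psi n0 (u s) (q s) <= Psi n0 (u t) (q t)) /\
          (n0 < 5 -> Psi n0 (u t) (q t) <= Psi n0 (u s) (q s)))
     /\
     (forall (t0 : R) (u q : R -> R),
        is_sol_on n0 (fun t => t0 <= t) u q ->
        (exists p, omega_limit u q p) ->
        (forall p, omega_limit u q p -> 0 < fst p /\ 0 < snd p) ->
        forall p, omega_limit u q p <-> p = fixed_pt n0)
     /\
     (forall (t0 : R) (u q : R -> R),
        is_sol_on n0 (fun t => t <= t0) u q ->
        (exists p, alpha_limit u q p) ->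
        (forall p, alpha_limit u q p -> 0 < fst p /\ 0 < snd p) ->
        forall p, alpha_limit u q p <-> p = fixed_pt n0)).
Proof.
split.
{ intros u q t H. destruct (H t eq_refl) as [P1 [P2 [D1 D2]]]. apply Psi_deriv; auto. }
intros H5. split; [|split].
- intros D u q Hconv Hsol s t Ds Dt Hst.
  assert (Hm := G_mono n0 Hn0 D u q Hconv Hsol s t Ds Dt Hst).
  split; intros Hc.
  + apply (Rmult_le_reg_l (n0 - 5)); lra.
  + apply (Rmult_le_reg_l (5 - n0)); lra.
- intros t0 u q Hsol [p0 Hp0] Hin p. split.
  + intros Hp. destruct p as [pu pq]. destruct (Hin _ Hp) as [A B]. simpl in A, B.
    apply (omega_main n0 Hn0 H5 t0 u q Hsol); auto.
  + intros ->. destruct p0 as [pu pq]. destruct (Hin _ Hp0) as [A B]. simpl in A, B.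
    rewrite <- (omega_main n0 Hn0 H5 t0 u q Hsol pu pq A B Hp0). exact Hp0.
- intros t0 u q Hsol [p0 Hp0] Hin p. split.
  + intros Hp. destruct p as [pu pq]. destruct (Hin _ Hp) as [A B]. simpl in A, B.
    apply (alpha_main n0 Hn0 H5 t0 u q Hsol); auto.
  + intros ->. destruct p0 as [pu pq]. destruct (Hin _ Hp0) as [A B]. simpl in A, B.
    rewrite <- (alpha_main n0 Hn0 H5 t0 u q Hsol pu pq A B Hp0). exact Hp0.
Qed.
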